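(* Let $\varepsilon\in\{0,\tfrac12\}$ and let $f$ be a biderivation of $\mathcal{SV}(\varepsilon)$. Then there exist linear maps $\phi,\psi:\mathcal{SV}(\varepsilon)\to\mathcal{SV}(\varepsilon)$ and linear complex-valued functions $\rho_1,\rho_2,\rho_3,\theta_1,\theta_2,\theta_3$ on $\mathcal{SV}(\varepsilon)$ such that for all $x,y\in\mathcal{SV}(\varepsilon)$, $$f(x,y)=\rho_1(x)D_1(y)+\rho_2(x)D_2(y)+\rho_3(x)D_3(y)+[\phi(x),y]=\theta_1(y)D_1(x)+\theta_2(y)D_2(x)+\theta_3(y)D_3(x)+[x,\psi(y)].$$
   Context: For $\varepsilon\in\{0,\frac12\}$, $\mathcal{SV}(\varepsilon)$ is the complex Lie algebra with basis $\{L_i,Y_j,M_i\mid i\in\mathbb{Z},\ j\in\varepsilon+\mathbb{Z}\}$ and brackets $[L_m,L_n]=(m-n)L_{m+n}$, $[L_m,Y_n]=(\frac12 m-n)Y_{m+n}$, $[L_m,M_n]=-nM_{m+n}$, $[Y_m,Y_n]=(m-n)M_{m+n}$, $[Y_m,M_n]=[M_m,M_n]=0$. A biderivation of a Lie algebra $L$ is a bilinear map $f:L\times L\to L$ with $f([x,y],z)=[x,f(y,z)]+[f(x,z),y]$ and $f(x,[y,z])=[f(x,y),z]+[y,f(x,z)]$ for all $x,y,z\in L$. The linear maps $D_1,D_2,D_3$ on $\mathcal{SV}(\varepsilon)$ are defined by $D_1(L_m)=M_m$, $D_1(Y_j)=D_1(M_m)=0$; $D_2(L_m)=mM_m$, $D_2(Y_j)=D_2(M_m)=0$;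 $D_3(L_m)=0$, $D_3(Y_j)=Y_j$, $D_3(M_m)=2M_m$ (for all $m\in\mathbb{Z}$, $j\in\varepsilon+\mathbb{Z}$). *)

(* Defs.v *)
(* The Schroedinger-Virasoro algebra SV(eps) over the
   complex numbers C := R[i] (R = Stdlib reals, an rcfType via Rstruct),
   realised as the free C-vector space {malg C[Idx]} (finitely supported
   functions Idx -> C, from multinomials' monalg) on the basis
   Idx = {L_m} + {Y_(k+eps)} + {M_m}, with the bracket extended bilinearly. *)
From HB Require Import structures.
From mathcomp Require Import all_boot all_order all_algebra.
From mathcomp Require Import finmap.
From mathcomp Require Import complex.
From mathcomp Require Import Rstruct.
From mathcomp.multinomials Require Import monalg.
From Stdlib Require Import Rdefinitions.

Set Implicit Arguments.
Unset Strict Implicit.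
Unset Printing Implicit Defensive.

Import Order.TTheory GRing.Theory Num.Theory.
Local Open Scope ring_scope.

Definition C : Type := (Rdefinitions.R)[i].

(* Basis indices:  inl (inl m) = L_m,  inl (inr k) = Y_(k + eps),  inr m = M_m. *)
Definition Idx : Type := ((int + int) + int)%type.
Definition Lb (m : int) : Idx := inl (inl m).
Definition Yb (k : int) : Idx := inl (inr k).
Definition Mb (m : int) : Idx := inr m.

(* eps is encoded by a boolean: false <-> eps = 0, true <-> eps = 1/2. *)
Definition epsv (e : bool) : C := if e then 2%:R^-1 else 0.
Definition twoeps (e : bool) : int := if e then 1 else 0.

Definition SV (e : bool) : Type := {malg C[Idx]}.

Definition bvec (e : bool) (c : C) (k : Idx) : SV e := << c *g k >>.

Definition br (e : bool) (a b : Idx) : SV e :=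
  match a, b with
  | inl (inl m), inl (inl n) => bvec e (m - n)%:~R (Lb (m + n))
  | inl (inl m), inl (inr k) =>
      bvec e (m%:~R / 2%:R - (k%:~R + epsv e)) (Yb (m + k))
  | inl (inr k), inl (inl m) =>
      bvec e (- (m%:~R / 2%:R - (k%:~R + epsv e))) (Yb (m + k))
  | inl (inl m), inr n => bvec e (- n%:~R) (Mb (m + n))
  | inr n, inl (inl m) => bvec e (n%:~R) (Mb (m + n))
  | inl (inr j), inl (inr k) =>
      bvec e ((j - k)%:~R) (Mb (j + k + twoeps e))
  | _, _ => 0
  end.

Definition lie (e : bool) (x y : SV e) : SV e :=
  \sum_(a <- msupp x) \sum_(b <- msupp y) (x@_a * y@_b) *: br e a b.

Definition linext (e : bool) (g : Idx -> SV e) (x : SV e) : SV e :=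
  \sum_(a <- msupp x) x@_a *: g a.

Definition D1b (e : bool) (a : Idx) : SV e :=
  match a with inl (inl m) => bvec e 1 (Mb m) | _ => 0 end.
Definition D2b (e : bool) (a : Idx) : SV e :=
  match a with inl (inl m) => bvec e m%:~R (Mb m) | _ => 0 end.
Definition D3b (e : bool) (a : Idx) : SV e :=
  match a with
  | inl (inl _) => 0
  | inl (inr k) => bvec e 1 (Yb k)
  | inr m => bvec e 2%:R (Mb m)
  end.

Definition D1 (e : bool) : SV e -> SV e := linext (@D1b e).
Definition D2 (e : bool) : SV e -> SV e := linext (@D2b e).
Definition D3 (e : bool) : SV e -> SV e := linext (@D3b e).

Definition biderivation (e : bool) (f : SV e -> SV e -> SV e) : Prop :=
  (forall x y z, f (lie x y) z = lie x (f y z) + lie (f x z) y) /\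
  (forall x y z, f x (lie y z) = lie (f x y) z + lie y (f x z)).

(* Main.v *)
Require Import Defs.
From HB Require Import structures.
From mathcomp Require Import all_boot all_order all_algebra.
From mathcomp Require Import finmap complex Rstruct.
From mathcomp.multinomials Require Import monalg.
Import GRing.Theory.
Local Open Scope ring_scope.
From mathcomp Require Import ring zify.
From Stdlib Require Import IndefiniteDescription.
Import Num.Theory.


Section Basics.
Variable e : bool.
Local Notation SV := (SV e).

Lemma sum_ext (V : zmodType) (x : SV) (dom : {fset Idx}) (F : Idx -> C -> V) :
  (msupp x `<=` dom)%fset -> (forall a, F a 0 = 0) ->
  \sum_(a <- msupp x) F a x@_a = \sum_(a <- dom) F a x@_a.
Proof.
move=> sub F0; apply: big_fset_incl => // a _ /mcoeff_outdom ->; exact: F0.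
Qed.

Lemma bvecE c k : bvec e c k = c *: << k >>.
Proof. by apply/malgP => b; rewrite /bvec mcoeffZ !mcoeffU mulr_natr. Qed.

Lemma msupp_lin (k : C) (x y : SV) : (msupp (k *: x + y) `<=` msupp x `|` msupp y)%fset.
Proof.
apply: fsubset_trans (msuppD_le _ _) _; apply: fsetSU; exact: msuppZ_le.
Qed.

Lemma lieE (x y : SV) dx dy : (msupp x `<=` dx)%fset -> (msupp y `<=` dy)%fset ->
  lie x y = \sum_(a <- dx) \sum_(b <- dy) (x@_a * y@_b) *: br e a b.
Proof.
move=> sx sy; rewrite /lie.
rewrite (@sum_ext _ x dx (fun a c => \sum_(b <- msupp y) (c * y@_b) *: br e a b)) //; last first.
  by move=> a; apply: big1 => b _; rewrite mul0r scale0r.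
apply: eq_bigr => a _.
by rewrite (@sum_ext _ y dy (fun b c => (x@_a * c) *: br e a b)) // => b; rewrite mulr0 scale0r.
Qed.

Lemma lie_linl (z : SV) : linear (fun x => lie x z).
Proof.
move=> k x y /=.
rewrite !(@lieE _ _ (msupp x `|` msupp y)%fset (msupp z)) ?msupp_lin ?fsubsetUl ?fsubsetUr //.
rewrite scaler_sumr -big_split; apply: eq_bigr => a _ /=.
rewrite scaler_sumr -big_split; apply: eq_bigr => b _ /=.
by rewrite mcoeffD mcoeffZ mulrDl scalerDl scalerA mulrA.
Qed.

Lemma lie_linr (x : SV) : linear (lie x).
Proof.
move=> k y z /=.
rewrite !(@lieE _ _ (msupp x) (msupp y `|` msupp z)%fset) ?msupp_lin ?fsubsetUl ?fsubsetUr //.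
rewrite scaler_sumr -big_split; apply: eq_bigr => a _ /=.
rewrite scaler_sumr -big_split; apply: eq_bigr => b _ /=.
by rewrite mcoeffD mcoeffZ mulrDr scalerDl scalerA mulrCA.
Qed.

Lemma linext_lin (g : Idx -> SV) : linear (linext g).
Proof.
move=> k x y; rewrite /linext.
rewrite !(@sum_ext _ _ (msupp x `|` msupp y)%fset (fun a c => c *: g a)) ?msupp_lin ?fsubsetUl ?fsubsetUr //;
  try by move=> a; rewrite scale0r.
rewrite scaler_sumr -big_split; apply: eq_bigr => a _ /=.
by rewrite mcoeffD mcoeffZ scalerDl scalerA.
Qed.

Lemma msupp1 (a : Idx) : msupp (<< a >> : SV) = [fset a]%fset.
Proof. by rewrite msuppU oner_eq0. Qed.

Lemma lie_basis (a b : Idx) : lie (<< a >> : SV) << b >> = br e a b.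
Proof. by rewrite /lie !msupp1 !big_seq_fset1 !mcoeffUU mulr1 scale1r. Qed.

Lemma lie_coef_r (v : SV) y b :
  (lie v << y >>)@_b = \sum_(a <- msupp v) v@_a * (br e a y)@_b.
Proof.
rewrite /lie raddf_sum; apply: eq_bigr => a _.
by rewrite msupp1 big_seq_fset1 mcoeffUU mulr1 /= mcoeffZ.
Qed.

Lemma lie_coef_l (v : SV) y b :
  (lie << y >> v)@_b = \sum_(a <- msupp v) v@_a * (br e y a)@_b.
Proof.
rewrite /lie msupp1 big_seq_fset1 raddf_sum; apply: eq_bigr => a _.
by rewrite mcoeffUU mul1r /= mcoeffZ.
Qed.

Lemma single_r (v : SV) y b a0 : (forall a, a != a0 -> (br e a y)@_b = 0) ->
  (lie v << y >>)@_b = v@_a0 * (br e a0 y)@_b.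
Proof.
move=> H; rewrite lie_coef_r.
have [a0in|a0n] := boolP (a0 \in msupp v).
  rewrite (big_fsetD1 a0) //= big1_fset ?addr0 // => a; rewrite in_fsetD1 => /andP[ne _] _.
  by rewrite H ?mulr0.
rewrite mcoeff_outdom // mul0r big1_fset // => a ain _.
by rewrite H ?mulr0 //; apply: contraNneq a0n => <-.
Qed.

Lemma single_l (v : SV) y b a0 : (forall a, a != a0 -> (br e y a)@_b = 0) ->
  (lie << y >> v)@_b = v@_a0 * (br e y a0)@_b.
Proof.
move=> H; rewrite lie_coef_l.
have [a0in|a0n] := boolP (a0 \in msupp v).
  rewrite (big_fsetD1 a0) //= big1_fset ?addr0 // => a; rewrite in_fsetD1 => /andP[ne _] _.
  by rewrite H ?mulr0.
rewrite mcoeff_outdom // mul0r big1_fset // => a ain _.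
by rewrite H ?mulr0 //; apply: contraNneq a0n => <-.
Qed.

Lemma linext_basis (g : Idx -> SV) a : linext g << a >> = g a.
Proof. by rewrite /linext msupp1 big_seq_fset1 mcoeffUU scale1r. Qed.

End Basics.

Definition mkLin (e : bool) (g : SV e -> SV e) (H : linear g) : {linear SV e -> SV e} :=
  HB.pack g (GRing.isLinear.Build _ _ _ _ g H).
Definition mkSc (e : bool) (g : SV e -> C) (H : scalar g) : {scalar SV e} :=
  HB.pack g (GRing.isLinear.Build _ _ _ _ g H).


Lemma decomp e (F : SV e -> SV e) (HF : linear F) (y : SV e) :
  F y = \sum_(a <- msupp y) y@_a *: F << a >>.
Proof.
transitivity (@mkLin e F HF (\sum_(a <- msupp y) << y@_a *g a >>)); first by rewrite -monalgE.
rewrite raddf_sum; apply: eq_bigr => a _.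
rewrite -[<< _ *g _ >>]/(bvec e _ _) bvecE.
exact: (scalable_linear HF).
Qed.

Lemma lieD_l e (v1 v2 z : SV e) : lie (v1 + v2) z = lie v1 z + lie v2 z.
Proof. by have := @lie_linl e z 1 v1 v2; rewrite !scale1r. Qed.

Lemma lieZ_l e k (v z : SV e) : lie (k *: v) z = k *: lie v z.
Proof. exact: (scalable_linear (@lie_linl e z)). Qed.

Lemma bvec0 e c k k' : k != k' -> (bvec e c k)@_k' = 0.
Proof. by move=> ne; rewrite mcoeffU (negbTE ne) mulr0n. Qed.

Definition brk (e : bool) (a b : Idx) : option Idx :=
  match a, b with
  | inl (inl m), inl (inl n) => Some (Lb (m + n))
  | inl (inl m), inl (inr k) => Some (Yb (m + k))
  | inl (inr k), inl (inl m) => Some (Yb (m + k))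
  | inl (inl m), inr n => Some (Mb (m + n))
  | inr n, inl (inl m) => Some (Mb (m + n))
  | inl (inr j), inl (inr k) => Some (Mb (j + k + twoeps e))
  | _, _ => None
  end.

Definition deg2 (e : bool) (a : Idx) : int :=
  match a with
  | inl (inl m) => 2 * m
  | inl (inr k) => 2 * k + twoeps e
  | inr m => 2 * m
  end.

Lemma br_supp e a c b : (br e a c)@_b != 0 -> brk e a c = Some b.
Proof.
case: a => [[m|j]|m]; case: c => [[n|k]|n] /=; rewrite ?mcoeff0 ?eqxx //;
  rewrite ?mcoeffU; case: (boolP (_ == b)) => [/eqP<-//|_]; rewrite mulr0n eqxx //.
Qed.

Lemma brk_deg e a c b : brk e a c = Some b -> deg2 e b = deg2 e a + deg2 e c.
Proof.
case: a => [[m|j]|m]; case: c => [[n|k]|n] //= [<-] /=; lia.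
Qed.

Lemma brk_inj_l e a a' c b : brk e a c = Some b -> brk e a' c = Some b -> a = a'.
Proof.
case: a => [[m|j]|m]; case: a' => [[m'|j']|m']; case: c => [[n|k]|n] //= [<-] //= [];
 try (move=> H; congr (inl (inl _)); lia);
 try (move=> H; congr (inl (inr _)); lia);
 try (move=> H; congr (inr _); lia).
Qed.

Lemma brk_inj_r e a c c' b : brk e a c = Some b -> brk e a c' = Some b -> c = c'.
Proof.
case: a => [[m|j]|m]; case: c => [[n|k]|n]; case: c' => [[n'|k']|n'] //= [<-] //= [];
 try (move=> H; congr (inl (inl _)); lia);
 try (move=> H; congr (inl (inr _)); lia);
 try (move=> H; congr (inr _); lia).
Qed.

Lemma lin1 {c d p q t u : C} : c != 0 -> p = q -> c * (t - u) = d * (p - q) -> t = u.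
Proof.
move=> c0 ->; rewrite subrr mulr0 => /eqP; rewrite mulf_eq0 (negbTE c0) subr_eq0.
by move/eqP.
Qed.

Lemma lin2 {c d1 d2 p1 q1 p2 q2 t u : C} : c != 0 -> p1 = q1 -> p2 = q2 ->
  c * (t - u) = d1 * (p1 - q1) + d2 * (p2 - q2) -> t = u.
Proof.
move=> c0 -> ->; rewrite !subrr !mulr0 addr0 => /eqP; rewrite mulf_eq0 (negbTE c0) subr_eq0.
by move/eqP.
Qed.

Lemma ind2 (P : nat -> Prop) : P 0%N -> P 1%N -> P 2%N ->
  (forall k, (2 <= k)%N -> P k -> P k.+1) -> forall k, P k.
Proof. move=> h0 h1 h2 hs; elim=> [//|[|[|k]] IH] //; exact: hs. Qed.

Lemma int_split (P : int -> Prop) : (forall k : nat, P (Posz k)) ->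
  (forall k : nat, P (- Posz k)) -> forall n, P n.
Proof. by move=> Hp Hn [k|k]; [exact: Hp | rewrite NegzE; exact: Hn]. Qed.

Lemma nz (k : int) : k != 0 -> (k%:~R : C) != 0.
Proof. by rewrite intr_eq0. Qed.

Lemma solveA (A : int -> C) :
  (forall m n : int, (m - n)%:~R * A (m + n) = A m * (m - n)%:~R + A n * (m - n)%:~R) ->
  forall n, A n = n%:~R * A 1.
Proof.
move=> H.
have A0 : A 0 = 0.
  have E : 1%:~R * A 1 = A 1 * 1%:~R + A 0 * 1%:~R := H 1 0.
  by apply: (lin1 (c:=1) (d:=-1) _ E); [rewrite oner_eq0 | ring].
have An : forall n, A (- n) = - A n.
  move=> n; have [->|n0] := eqVneq n 0; first by rewrite oppr0 A0 oppr0.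
  have E := H n (-n); rewrite opprK addrN A0 in E.
  apply: (lin1 (c:=(n+n)%:~R) (d:=-1) _ E); [apply: nz; lia | ring].
have Ap : forall k : nat, A (Posz k) = (Posz k)%:~R * A 1.
  apply: ind2.
  - by rewrite A0 mul0r.
  - by rewrite mul1r.
  - have E : 3%:~R * A 1 = A 2 * 3%:~R + A (-1) * 3%:~R := H 2 (-1).
    rewrite An in E.
    apply: (lin1 (c:=3%:~R) (d:= -1) _ E); [exact: nz | ring].
  move=> k k2 IH.
  have E := H k 1; rewrite IH in E.
  have -> : Posz k.+1 = k%:Z + 1 by lia.
  apply: (lin1 (c:=(k%:Z - 1)%:~R) (d:= 1) _ E); [apply: nz; lia | ring].
apply: int_split => k; first exact: Ap.
by rewrite An Ap mulrNz mulNr.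
Qed.

Definition yc (e : bool) (m k : int) : C := m%:~R / 2%:R - (k%:~R + epsv e).

Lemma ycE e m k : yc e m k = (m - 2 * k - twoeps e)%:~R / 2%:R.
Proof. by case: e; rewrite /yc /epsv /twoeps; field. Qed.

Lemma solveB (B : int -> C) :
  (forall m n : int, (m - n)%:~R * B (m + n) = B m * m%:~R + B n * - n%:~R) ->
  forall n, B n = B 0 + n%:~R * (B 1 - B 0).
Proof.
move=> H.
have Bm1 : B (-1) = B 0 + (-1)%:~R * (B 1 - B 0).
  have E : 2%:~R * B 0 = B 1 * 1%:~R + B (-1) * - (-1)%:~R := H 1 (-1).
  apply: (lin1 (c:=1) (d:=-1) _ E); [by rewrite oner_eq0 | ring].
apply: int_split.
  apply: ind2.
  - ring.
  - ring.
  - have E : 3%:~R * B 1 = B 2 * 2%:~R + B (-1) * - (-1)%:~R := H 2 (-1).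
    rewrite Bm1 in E.
    apply: (lin1 (c:=2%:~R) (d:= -1) _ E); [exact: nz | ring].
  move=> k k2 IH.
  have E := H k 1; rewrite IH in E.
  have -> : Posz k.+1 = k%:Z + 1 by lia.
  apply: (lin1 (c:=(k%:Z - 1)%:~R) (d:= 1) _ E); [apply: nz; lia | ring].
apply: ind2.
- ring.
- exact: Bm1.
- have E : (-3)%:~R * B (-1) = B (-2) * (-2)%:~R + B 1 * - 1%:~R := H (-2) 1.
  rewrite Bm1 in E.
  apply: (lin1 (c:=2%:~R) (d:= 1) _ E); [exact: nz | ring].
move=> k k2 IH.
have E := H (- k%:Z) (-1); rewrite IH Bm1 in E.
have -> : - Posz k.+1 = - k%:Z + -1 by lia.
apply: (lin1 (c:=(1 - k%:Z)%:~R) (d:= 1) _ E); [apply: nz; lia | ring].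
Qed.

Lemma solveG (G : int -> C) :
  (forall m n : int, (m - n)%:~R * G (m + n) = G m * - yc false n m + G n * yc false m n) ->
  forall n, G n = n%:~R * G 1.
Proof.
move=> H.
have G0 : G 0 = 0.
  have E : 1%:~R * G 1 = G 1 * - yc false 0 1 + G 0 * yc false 1 0 := H 1 0.
  rewrite /yc /epsv in E.
  apply: (lin1 (c:=1) (d:=-2%:R) _ E); [by rewrite oner_eq0 | by field].
have Gm1 : G (-1) = - G 1.
  have E : 2%:~R * G 0 = G 1 * - yc false (-1) 1 + G (-1) * yc false 1 (-1) := H 1 (-1).
  rewrite /yc /epsv G0 in E.
  apply: (lin1 (c:=3%:R) (d:=-2%:R) _ E); [by rewrite pnatr_eq0 | by field].
apply: int_split.
  apply: ind2.
  - by rewrite G0 mul0r.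
  - by rewrite mul1r.
  - have E : 3%:~R * G 1 = G 2 * - yc false (-1) 2 + G (-1) * yc false 2 (-1) := H 2 (-1).
    rewrite /yc /epsv Gm1 in E.
    apply: (lin1 (c:=5%:R) (d:= -2%:R) _ E); [by rewrite pnatr_eq0 | by field].
  move=> k k2 IH.
  have E := H k 1; rewrite IH /yc /epsv in E.
  have -> : Posz k.+1 = k%:Z + 1 by lia.
  apply: (lin1 (c:=(k%:Z - 1)%:~R) (d:= 1) _ E); [apply: nz; lia | by field].
apply: ind2.
- by rewrite oppr0 G0 mul0r.
- by transitivity (- G 1); [exact: Gm1 | ring].
- have E : (-3)%:~R * G (-1) = G (-2) * - yc false 1 (-2) + G 1 * yc false (-2) 1 := H (-2) 1.
  rewrite /yc /epsv Gm1 in E.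
  apply: (lin1 (c:=5%:R) (d:= 2%:R) _ E); [by rewrite pnatr_eq0 | by field].
move=> k k2 IH.
have E := H (- k%:Z) (-1); rewrite IH Gm1 /yc /epsv in E.
have -> : - Posz k.+1 = - k%:Z + -1 by lia.
apply: (lin1 (c:=(1 - k%:Z)%:~R) (d:= 1) _ E); [apply: nz; lia | by field].
Qed.

Lemma solveQ e (A Q : int -> C) (al : C) : (forall m, A m = m%:~R * al) ->
  (forall m k : int, yc e m k * Q (m + k) = A m * yc e m k + Q k * yc e m k) ->
  forall k, Q k = Q 0 + k%:~R * al.
Proof.
move=> HA H.
have Qk0 : forall k, yc e k 0 != 0 -> Q k = Q 0 + k%:~R * al.
  move=> k nz0; have E := H k 0; rewrite addr0 HA in E.
  by apply: (lin1 (c:=yc e k 0) (d:= 1) nz0 E); ring.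
move=> k; have [->|k0] := eqVneq k 0; first by rewrite mul0r addr0.
case: e H HA Qk0 => H HA Qk0; last first.
  by apply: Qk0; rewrite ycE /twoeps mulf_eq0 invr_eq0 pnatr_eq0 /= orbF intr_eq0; lia.
have [->|k1] := eqVneq k 1; last first.
  by apply: Qk0; rewrite ycE /twoeps mulf_eq0 invr_eq0 pnatr_eq0 /= orbF intr_eq0; lia.
have Qm1 : Q (-1) = Q 0 + (-1)%:~R * al.
  apply: Qk0; rewrite ycE /twoeps mulf_eq0 invr_eq0 pnatr_eq0 /= orbF intr_eq0; lia.
have E : yc true 2 (-1) * Q 1 = A 2 * yc true 2 (-1) + Q (-1) * yc true 2 (-1) := H 2 (-1).
rewrite Qm1 HA /yc /epsv in E.
apply: (lin1 (c:=3%:R) (d:= 2%:R) _ E); [by rewrite pnatr_eq0 | by field].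
Qed.

Lemma solveV (A V : int -> C) (al : C) : (forall m, A m = m%:~R * al) ->
  (forall m n : int, - n%:~R * V (m + n) = A m * - n%:~R + V n * - n%:~R) ->
  forall n, V n = V 0 + n%:~R * al.
Proof.
move=> HA H n.
have E1 := H (n - 1) 1; rewrite subrK HA in E1.
have E0 : - 1%:~R * V 0 = A (-1) * - 1%:~R + V 1 * - 1%:~R := H (-1) 1.
rewrite HA in E0.
apply: (lin2 (c:=1) (d1:=-1) (d2:=1) _ E1 E0); [by rewrite oner_eq0 | ring].
Qed.

Lemma solveP (P : int -> C) :
  (forall m k : int, yc false m k * P (m + k) = P k * (m - k)%:~R) -> forall n, P n = 0.
Proof.
move=> H.
have P2 : P 2 = 0.
  have E : yc false 1 1 * P 2 = P 1 * 0%:~R := H 1 1.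
  rewrite /yc /epsv in E.
  apply: (lin1 (c:=1) (d:=-2%:R) _ E); [by rewrite oner_eq0 | by field].
have P0 : P 0 = 0.
  have E : yc false 2 0 * P 2 = P 0 * 2%:~R := H 2 0.
  rewrite /yc /epsv P2 in E.
  apply: (lin1 (c:=2%:R) (d:=-1) _ E); [by rewrite pnatr_eq0 | by field].
move=> n; have [->|n0] := eqVneq n 0; first exact: P0.
have E := H n 0; rewrite ?addr0 ?subr0 ?oppr0 ?addr0 P0 /yc /epsv in E.
apply: (lin1 (c:=n%:~R) (d:=2%:R) _ E); [exact: nz | by field].
Qed.

Lemma solveR (G R : int -> C) (g : C) : (forall m, G m = m%:~R * g) ->
  (forall m k : int, yc false m k * R (m + k) = G m * (m - k)%:~R + R k * - k%:~R) ->
  forall n, R n = 2%:R * n%:~R * g.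
Proof.
move=> HG H.
have Rn : forall n, n != 0 -> R n = 2%:R * n%:~R * g.
  move=> n n0; have E := H n 0; rewrite ?addr0 ?subr0 ?oppr0 ?addr0 HG /yc /epsv in E.
  apply: (lin1 (c:=n%:~R) (d:=2%:R) _ E); [exact: nz | by field].
move=> n; have [->|n0] := eqVneq n 0; last exact: Rn.
have E : yc false 1 (-1) * R 0 = G 1 * 2%:~R + R (-1) * - (-1)%:~R := H 1 (-1).
rewrite (Rn (-1)) // HG /yc /epsv in E.
apply: (lin1 (c:=3%:R) (d:=2%:R) _ E); [by rewrite pnatr_eq0 | by field].
Qed.

Lemma solveS (S : int -> C) :
  (forall m n : int, - n%:~R * S (m + n) = S n * (m - n)%:~R) -> forall n, S n = 0.
Proof.
move=> H.
have S2 : S 2 = 0.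
  have E : - 1%:~R * S 2 = S 1 * 0%:~R := H 1 1.
  apply: (lin1 (c:=1) (d:=-1) _ E); [by rewrite oner_eq0 | ring].
have S1 : S 1 = 0.
  have E : - 2%:~R * S 1 = S 2 * (-3)%:~R := H (-1) 2.
  rewrite S2 in E.
  apply: (lin1 (c:=2%:R) (d:=-1) _ E); [by rewrite pnatr_eq0 | ring].
move=> n; have E := H (n - 1) 1; rewrite subrK S1 in E.
apply: (lin1 (c:=1) (d:=-1) _ E); [by rewrite oner_eq0 | ring].
Qed.

Lemma solveT (T : int -> C) :
  (forall m n : int, - n%:~R * T (m + n) = T n * yc false m n) -> forall n, T n = 0.
Proof.
move=> H.
have T3 : T 3 = 0.
  have E : - 1%:~R * T 3 = T 1 * yc false 2 1 := H 2 1.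
  rewrite /yc /epsv in E.
  apply: (lin1 (c:=1) (d:=-1) _ E); [by rewrite oner_eq0 | by field].
move=> n; have E := H (n - 3) 3; rewrite subrK T3 in E.
apply: (lin1 (c:=3%:R) (d:=-1) _ E); [by rewrite pnatr_eq0 | ring].
Qed.

Lemma V0aux (V0 Q0 al ep : C) :
  1%:~R * (V0 + (1%:~R + 2%:R * ep) * al) = (Q0 + 1%:~R * al) * 1%:~R + Q0 * 1%:~R ->
  V0 = 2%:R * (Q0 - al * ep).
Proof. by move=> E; apply: (lin1 (c:=1) (d:=1) _ E); [rewrite oner_eq0 | ring]. Qed.

Lemma fin2 {L p1 x1 p2 x2 y1 y2 : C} : L = p1 * x1 + p2 * x2 -> x1 = y1 -> x2 = y2 ->
  L = p1 * y1 + p2 * y2.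
Proof. by move=> -> -> ->. Qed.
Lemma fin1 {L p1 x1 y1 : C} : L = p1 * x1 -> x1 = y1 -> L = p1 * y1.
Proof. by move=> -> ->. Qed.

Lemma mcoeff_sum e (I : Type) (r : seq I) (F : I -> SV e) k :
  (\sum_(i <- r) F i)@_k = \sum_(i <- r) (F i)@_k.
Proof. by elim: r => [|x r IH]; rewrite ?big_nil ?big_cons ?mcoeff0 // mcoeffD IH. Qed.

Section BrFacts.
Variable e : bool.
Lemma brLL m n : br e (Lb m) (Lb n) = bvec e (m - n)%:~R (Lb (m + n)). Proof. by []. Qed.
Lemma brLY m k : br e (Lb m) (Yb k) = bvec e (yc e m k) (Yb (m + k)). Proof. by []. Qed.
Lemma brYL k m : br e (Yb k) (Lb m) = bvec e (- yc e m k) (Yb (m + k)). Proof. by []. Qed.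
Lemma brLM m n : br e (Lb m) (Mb n) = bvec e (- n%:~R) (Mb (m + n)). Proof. by []. Qed.
Lemma brML n m : br e (Mb n) (Lb m) = bvec e n%:~R (Mb (m + n)). Proof. by []. Qed.
Lemma brYY j k : br e (Yb j) (Yb k) = bvec e (j - k)%:~R (Mb (j + k + twoeps e)). Proof. by []. Qed.

Lemma bvecK c k k' : k = k' -> (bvec e c k)@_k' = c.
Proof. by move=> <-; rewrite mcoeffUU. Qed.

Lemma single_r' (v : SV e) y b a0 : brk e a0 y = Some b ->
  (lie v << y >>)@_b = v@_a0 * (br e a0 y)@_b.
Proof.
move=> Ha0; apply: single_r => a ne; apply/eqP; apply: contraNT ne => /br_supp Ha.
by apply/eqP; exact: brk_inj_l Ha Ha0.
Qed.

Lemma single_l' (v : SV e) y b a0 : brk e y a0 = Some b ->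
  (lie << y >> v)@_b = v@_a0 * (br e y a0)@_b.
Proof.
move=> Ha0; apply: single_l => a ne; apply/eqP; apply: contraNT ne => /br_supp Ha.
by apply/eqP; exact: brk_inj_r Ha Ha0.
Qed.

Lemma none_r (v : SV e) y b : (forall a, brk e a y <> Some b) -> (lie v << y >>)@_b = 0.
Proof.
move=> H; rewrite lie_coef_r big1 // => a _.
have [/br_supp/H //|] := boolP ((br e a y)@_b != 0).
by rewrite negbK => /eqP ->; rewrite mulr0.
Qed.

Lemma none_l (v : SV e) y b : (forall a, brk e y a <> Some b) -> (lie << y >> v)@_b = 0.
Proof.
move=> H; rewrite lie_coef_l big1 // => a _.
have [/br_supp/H //|] := boolP ((br e y a)@_b != 0).
by rewrite negbK => /eqP ->; rewrite mulr0.
Qed.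
End BrFacts.

Lemma degYL e j n : deg2 e (Yb j) = deg2 e (Lb n) -> e = false /\ j = n.
Proof. by case: e; rewrite /= /twoeps => H; split => //; lia. Qed.

Lemma degYM e j n : deg2 e (Yb j) = deg2 e (Mb n) -> e = false /\ j = n.
Proof. by case: e; rewrite /= /twoeps => H; split => //; lia. Qed.

Lemma te_eps e : ((twoeps e)%:~R : C) = 2%:R * epsv e.
Proof. by case: e; rewrite /twoeps /epsv //=; rewrite ?mulr0 // divff // pnatr_eq0. Qed.

Section DFacts.
Variable e : bool.
Lemma D1bL n : D1b e (Lb n) = bvec e 1 (Mb n). Proof. by []. Qed.
Lemma D2bL n : D2b e (Lb n) = bvec e n%:~R (Mb n). Proof. by []. Qed.
Lemma D3bL n : D3b e (Lb n) = 0. Proof. by []. Qed.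
Lemma D1bY k : D1b e (Yb k) = 0. Proof. by []. Qed.
Lemma D2bY k : D2b e (Yb k) = 0. Proof. by []. Qed.
Lemma D3bY k : D3b e (Yb k) = bvec e 1 (Yb k). Proof. by []. Qed.
Lemma D1bM n : D1b e (Mb n) = 0. Proof. by []. Qed.
Lemma D2bM n : D2b e (Mb n) = 0. Proof. by []. Qed.
Lemma D3bM n : D3b e (Mb n) = bvec e 2%:R (Mb n). Proof. by []. Qed.
Lemma brYM k n : br e (Yb k) (Mb n) = 0. Proof. by []. Qed.
End DFacts.

Lemma coefR e (k1 k2 k3 l h : C) a b (L : SV e) :
  (k1 *: D1b e a + k2 *: D2b e a + k3 *: D3b e a + (L + (l *: br e (Lb 0) a + h *: br e (Yb 0) a)))@_b
  = k1 * (D1b e a)@_b + k2 * (D2b e a)@_b + k3 * (D3b e a)@_b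
    + (L@_b + (l * (br e (Lb 0) a)@_b + h * (br e (Yb 0) a)@_b)).
Proof.
rewrite !mcoeffD.
congr (_ + _ + _ + (_ + (_ + _))); exact: mcoeffZ.
Qed.

Lemma scal_comb (R : comNzRingType) (V : lmodType R) (t k1 k2 k3 : R) (X X1 X2 X3 Y : V) :
  X = k1 *: X1 + k2 *: X2 + k3 *: X3 + Y ->
  t *: X = k1 *: (t *: X1) + k2 *: (t *: X2) + k3 *: (t *: X3) + t *: Y.
Proof. by move=> ->; rewrite !scalerDr !scalerA ![t * _]mulrC. Qed.

Lemma comb1 (X S T L : C) : X = S + T -> L = 0 -> X = S + (L + T).
Proof. by move=> -> ->; rewrite add0r. Qed.
Lemma comb2 (X S T L : C) : X = L -> S + T = 0 -> X = S + (L + T).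
Proof. by move=> -> H; rewrite addrCA H addr0. Qed.

Section Der.
Variable e : bool.
Variable D : SV e -> SV e.
Hypothesis Dlin : linear D.
Hypothesis Dder : forall x y, D (lie x y) = lie (D x) y + lie x (D y).

Lemma DZ c v : D (c *: v) = c *: D v.
Proof. exact: (scalable_linear Dlin). Qed.

Lemma eqn x y b : (D (br e x y))@_b = (lie (D << x >>) << y >>)@_b + (lie << x >> (D << y >>))@_b.
Proof. by rewrite -lie_basis Dder mcoeffD. Qed.

Lemma eqn2 x y b c z a0 a1 : br e x y = bvec e c z -> brk e a0 y = Some b -> brk e x a1 = Some b ->
  c * (D << z >>)@_b = (D << x >>)@_a0 * (br e a0 y)@_b + (D << y >>)@_a1 * (br e x a1)@_b.
Proof.
move=> Hb H0 H1.
have h := @single_r' e (D << x >>) _ _ _ H0.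
have h2 := @single_l' e (D << y >>) _ _ _ H1.
have E := eqn x y b.
rewrite Hb bvecE DZ in E.
exact: etrans (esym (mcoeffZ _ _ _)) (etrans E (congr2 +%R h h2)).
Qed.

Lemma eqn2n x y b c z a1 : br e x y = bvec e c z -> (forall a, brk e a y <> Some b) -> brk e x a1 = Some b ->
  c * (D << z >>)@_b = (D << y >>)@_a1 * (br e x a1)@_b.
Proof.
move=> Hb H0 H1.
have h := @none_r e (D << x >>) _ _ H0.
have h2 := @single_l' e (D << y >>) _ _ _ H1.
have E := eqn x y b.
rewrite Hb bvecE DZ in E.
exact: etrans (esym (mcoeffZ _ _ _)) (etrans E (etrans (congr2 +%R h h2) (add0r _))).
Qed.

Lemma bvec_at c z b : (D (bvec e c z))@_b = c * (D << z >>)@_b.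
Proof. by rewrite bvecE DZ mcoeffZ. Qed.

Definition cA n := (D << Lb n >>)@_(Lb n).
Definition cB n := (D << Lb n >>)@_(Mb n).
Definition cG n := (D << Lb n >>)@_(Yb n).
Definition cQ k := (D << Yb k >>)@_(Yb k).
Definition cP k := (D << Yb k >>)@_(Lb k).
Definition cR k := (D << Yb k >>)@_(Mb k).
Definition cV n := (D << Mb n >>)@_(Mb n).
Definition cS n := (D << Mb n >>)@_(Lb n).
Definition cT n := (D << Mb n >>)@_(Yb n).

Lemma EqA (m n : int) : (m - n)%:~R * cA (m + n) = cA m * (m - n)%:~R + cA n * (m - n)%:~R.
Proof.
have E := @eqn2 (Lb m) (Lb n) (Lb (m + n)) _ _ (Lb m) (Lb n) (brLL _ _ _) erefl erefl.
have c1 : (br e (Lb m) (Lb n))@_(Lb (m + n)) = (m - n)%:~R by rewrite brLL bvecK.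
exact (fin2 E c1 c1).
Qed.

Lemma EqB (m n : int) : (m - n)%:~R * cB (m + n) = cB m * m%:~R + cB n * - n%:~R.
Proof.
have E := @eqn2 (Lb m) (Lb n) (Mb (m + n)) _ _ (Mb m) (Mb n) (brLL _ _ _)  ltac:(by rewrite /= addrC) erefl.
have c1 : (br e (Mb m) (Lb n))@_(Mb (m + n)) = m%:~R by rewrite brML bvecK // addrC.
have c2 : (br e (Lb m) (Mb n))@_(Mb (m + n)) = - n%:~R by rewrite brLM bvecK.
exact (fin2 E c1 c2).
Qed.

Lemma EqG (m n : int) : (m - n)%:~R * cG (m + n) = cG m * - yc e n m + cG n * yc e m n.
Proof.
have E := @eqn2 (Lb m) (Lb n) (Yb (m + n)) _ _ (Yb m) (Yb n) (brLL _ _ _)  ltac:(by rewrite /= addrC) erefl.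
have c1 : (br e (Yb m) (Lb n))@_(Yb (m + n)) = - yc e n m by rewrite brYL bvecK // addrC.
have c2 : (br e (Lb m) (Yb n))@_(Yb (m + n)) = yc e m n by rewrite brLY bvecK.
exact (fin2 E c1 c2).
Qed.

Lemma EqQ (m k : int) : yc e m k * cQ (m + k) = cA m * yc e m k + cQ k * yc e m k.
Proof.
have E := @eqn2 (Lb m) (Yb k) (Yb (m + k)) _ _ (Lb m) (Yb k) (brLY _ _ _) erefl erefl.
have c1 : (br e (Lb m) (Yb k))@_(Yb (m + k)) = yc e m k by rewrite brLY bvecK.
exact (fin2 E c1 c1).
Qed.

Lemma EqP (m k : int) : yc e m k * cP (m + k) = cP k * (m - k)%:~R.
Proof.
have E := @eqn2n (Lb m) (Yb k) (Lb (m + k)) _ _ (Lb k) (brLY _ _ _) ltac:(by case=> [[?|?]|?]) erefl.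
have c1 : (br e (Lb m) (Lb k))@_(Lb (m + k)) = (m - k)%:~R by rewrite brLL bvecK.
exact (fin1 E c1).
Qed.

Lemma EqR (m k : int) : e = false -> yc e m k * cR (m + k) = cG m * (m - k)%:~R + cR k * - k%:~R.
Proof.
move=> e0.
have E := @eqn2 (Lb m) (Yb k) (Mb (m + k)) _ _ (Yb m) (Mb k) (brLY _ _ _)  ltac:(by rewrite /= e0 /= addr0) erefl.
have c1 : (br e (Yb m) (Yb k))@_(Mb (m + k)) = (m - k)%:~R by rewrite brYY bvecK // e0 /= addr0.
have c2 : (br e (Lb m) (Mb k))@_(Mb (m + k)) = - k%:~R by rewrite brLM bvecK.
exact (fin2 E c1 c2).
Qed.

Lemma EqV (m n : int) : - n%:~R * cV (m + n) = cA m * - n%:~R + cV n * - n%:~R.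
Proof.
have E := @eqn2 (Lb m) (Mb n) (Mb (m + n)) _ _ (Lb m) (Mb n) (brLM _ _ _) erefl erefl.
have c1 : (br e (Lb m) (Mb n))@_(Mb (m + n)) = - n%:~R by rewrite brLM bvecK.
exact (fin2 E c1 c1).
Qed.

Lemma EqS (m n : int) : - n%:~R * cS (m + n) = cS n * (m - n)%:~R.
Proof.
have E := @eqn2n (Lb m) (Mb n) (Lb (m + n)) _ _ (Lb n) (brLM _ _ _) ltac:(by case=> [[?|?]|?]) erefl.
have c1 : (br e (Lb m) (Lb n))@_(Lb (m + n)) = (m - n)%:~R by rewrite brLL bvecK.
exact (fin1 E c1).
Qed.

Lemma EqT (m n : int) : - n%:~R * cT (m + n) = cT n * yc e m n.
Proof.
have E := @eqn2n (Lb m) (Mb n) (Yb (m + n)) _ _ (Yb n) (brLM _ _ _) ltac:(by case=> [[?|?]|?]) erefl.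
have c1 : (br e (Lb m) (Yb n))@_(Yb (m + n)) = yc e m n by rewrite brLY bvecK.
exact (fin1 E c1).
Qed.

Lemma EqYY (j k : int) : (j - k)%:~R * cV (j + k + twoeps e) = cQ j * (j - k)%:~R + cQ k * (j - k)%:~R.
Proof.
have E := @eqn2 (Yb j) (Yb k) (Mb (j + k + twoeps e)) _ _ (Yb j) (Yb k) (brYY _ _ _) erefl erefl.
have c1 : (br e (Yb j) (Yb k))@_(Mb (j + k + twoeps e)) = (j - k)%:~R by rewrite brYY bvecK.
exact (fin2 E c1 c1).
Qed.


Definition dg (a : Idx) : C := (deg2 e a)%:~R / 2%:R.
Definition w := D << Lb 0 >>.
Definition u1 : SV e := \sum_(a <- msupp w) (w@_a / dg a) *: << a >>.

Lemma u1_coef a : u1@_a = w@_a / dg a.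
Proof.
rewrite /u1 mcoeff_sum.
have [ain|anot] := boolP (a \in msupp w).
  rewrite (big_fsetD1 a ain) big1_fset; last first.
    move=> a'; rewrite in_fsetD1 => /andP[ne _] _.
    by rewrite mcoeffZ mcoeffU (negbTE ne) mulr0n mulr0.
  by rewrite Monoid.mulm1 mcoeffZ mcoeffUU mulr1.
rewrite mcoeff_outdom // mul0r big1_fset // => a' a'in _.
rewrite mcoeffZ mcoeffU; case: eqP => [E|]; last by rewrite mulr0n mulr0.
by move: a'in anot; rewrite E => ->.
Unshelve. all: exact: true. Qed.

Lemma msupp_u1 : (msupp u1 `<=` msupp w)%fset.
Proof.
apply/fsubsetP => a; rewrite -!mcoeff_neq0 u1_coef.
by apply: contraNneq => ->; rewrite mul0r.
Qed.

Lemma dg_sub a b : (dg b - dg a) = (deg2 e b - deg2 e a)%:~R / 2%:R.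
Proof. by rewrite /dg intrB mulrBl. Qed.

Lemma dg_neq a b : deg2 e b != deg2 e a -> dg b - dg a != 0.
Proof.
move=> ne; rewrite dg_sub mulf_eq0 invr_eq0 pnatr_eq0 orbF intr_eq0.
by rewrite subr_eq0.
Qed.

Lemma brk_L0 b : brk e (Lb 0) b = Some b.
Proof. by case: b => [[n|k]|n] /=; rewrite add0r. Qed.

Lemma brL0_coef b : (br e (Lb 0) b)@_b = - dg b.
Proof.
case: b => [[n|k]|n]; rewrite ?brLL ?brLY ?brLM bvecK ?add0r //; rewrite /dg /=.
- by rewrite intrN intrM; field.
- by rewrite /yc; case: e; rewrite /epsv /twoeps ?addr0 ?intrD intrM; field.
- by rewrite intrM; field.
Qed.

Lemma br_L0 x : br e (Lb 0) x = (- dg x) *: << x >>.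
Proof.
apply/malgP => b; rewrite mcoeffZ mcoeffU.
have [<-|ne] := eqVneq x b; first by rewrite brL0_coef mulr1.
rewrite mulr0n mulr0; apply/eqP; apply: contraNT ne => /br_supp.
by rewrite brk_L0 => -[->].
Qed.

Lemma L0act (v : SV e) b : (lie << Lb 0 >> v)@_b = - dg b * v@_b.
Proof. by rewrite (@single_l' e v _ _ b (brk_L0 b)) brL0_coef mulrC. Qed.

Lemma w_u1 x b : deg2 e b != deg2 e x -> (lie w << x >>)@_b = (dg b - dg x) * (lie u1 << x >>)@_b.
Proof.
move=> nd.
have l1 := @lie_coef_r e w x b.
have l2 := @lie_coef_r e u1 x b.
have s := @sum_ext e C u1 (msupp w) (fun a c => c * (br e a x)@_b) msupp_u1 (fun a => mul0r _).
apply: (etrans l1); apply: (etrans _ (congr1 ( *%R (dg b - dg x)) (esym (etrans l2 s)))).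
rewrite mulr_sumr; apply: eq_bigr => a _; rewrite u1_coef.
have [/br_supp Hk|] := boolP ((br e a x)@_b != 0); last first.
  by rewrite negbK => /eqP ->; rewrite !mulr0.
have Hd := @brk_deg _ _ _ _ Hk.
have [da|da] := eqVneq (deg2 e a) 0.
  by move: nd; rewrite Hd da add0r eqxx.
have -> : dg b - dg x = dg a by rewrite dg_sub Hd addrK.
have : dg a != 0 by rewrite /dg mulf_eq0 invr_eq0 pnatr_eq0 orbF intr_eq0.
by move=> na; field.
Qed.

Lemma offdeg x b : deg2 e b != deg2 e x -> (D << x >>)@_b = (lie u1 << x >>)@_b.
Proof.
move=> nd.
have E := eqn (Lb 0) x b.
have h1 : (D (br e (Lb 0) x))@_b = - dg x * (D << x >>)@_b by rewrite br_L0 DZ mcoeffZ.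
have h2 := L0act (D << x >>) b.
have h3 := @w_u1 x b nd.
have E2 := etrans (esym h1) (etrans E (congr2 +%R h3 h2)).
by apply: (lin1 (c:=dg b - dg x) (d:=1) (@dg_neq _ _ nd) E2); ring.
Qed.

Lemma samedeg x b : deg2 e b = deg2 e x -> (lie u1 << x >>)@_b = 0.
Proof.
move=> sd; rewrite (@lie_coef_r e u1 x b) big1 // => a _.
rewrite u1_coef.
have [/br_supp Hk|] := boolP ((br e a x)@_b != 0); last first.
  by rewrite negbK => /eqP ->; rewrite !mulr0.
have Hd := @brk_deg _ _ _ _ Hk.
have da : deg2 e a = 0 by move: Hd; rewrite sd; lia.
by rewrite /dg da mul0r invr0 !mulr0 mul0r.
Qed.


Definition al := cA 1.
Lemma Ae m : cA m = m%:~R * al. Proof. exact: solveA EqA m. Qed.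
Lemma Be n : cB n = cB 0 + n%:~R * (cB 1 - cB 0). Proof. exact: solveB EqB n. Qed.
Lemma Qe k : cQ k = cQ 0 + k%:~R * al. Proof. exact: (@solveQ e cA cQ al Ae EqQ k). Qed.
Lemma Ve n : cV n = cV 0 + n%:~R * al. Proof. exact: (@solveV cA cV al Ae EqV n). Qed.
Lemma V0e : cV 0 = 2%:R * (cQ 0 - al * epsv e).
Proof.
have E : 1%:~R * cV (1 + twoeps e) = cQ 1 * 1%:~R + cQ 0 * 1%:~R := EqYY 1 0.
rewrite Ve Qe intrD te_eps in E.
exact: V0aux E.
Qed.

Section EFalse.
Hypothesis e0 : e = false.
Lemma ye m n : yc e m n = yc false m n. Proof. by rewrite e0. Qed.
Lemma Ge n : cG n = n%:~R * cG 1.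
Proof. by apply: solveG => m k; rewrite -!ye; exact: EqG. Qed.
Lemma Pe n : cP n = 0.
Proof. by apply: solveP => m k; rewrite -!ye; exact: EqP. Qed.
Lemma Re n : cR n = 2%:R * n%:~R * cG 1.
Proof. by apply: (@solveR cG cR _ Ge) => m k; rewrite -!ye; exact: EqR. Qed.
Lemma Se n : cS n = 0.
Proof. exact: (solveS cS EqS n). Qed.
Lemma Te n : cT n = 0.
Proof. by apply: solveT => m k; rewrite -!ye; exact: EqT. Qed.
End EFalse.

Definition gg : C := if e then 0 else cG 1.
Definition c1 := cB 0.
Definition c2 := cB 1 - cB 0.
Definition c3 := cQ 0 - al * epsv e.
Definition lam := - al.
Definition hh := - 2%:R * gg.
Definition rhs a b := c1 * (D1b e a)@_b + c2 * (D2b e a)@_b + c3 * (D3b e a)@_b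
  + (lam * (br e (Lb 0) a)@_b + hh * (br e (Yb 0) a)@_b).

Lemma rhs_off a b : deg2 e b != deg2 e a -> rhs a b = 0.
Proof.
move=> nd.
have [z1 [z2 z3]] : [/\ (D1b e a)@_b = 0, (D2b e a)@_b = 0 & (D3b e a)@_b = 0].
  by case: a nd => [[m|k]|m] /= nd; split; rewrite ?mcoeff0 //; apply: bvec0;
    apply: contraNneq nd => <-.
have zL : (br e (Lb 0) a)@_b = 0.
  apply/eqP; apply: contraNT nd => /br_supp /(@brk_deg _ _ _ _) ->.
  by rewrite /= mulr0 add0r.
have zY : hh * (br e (Yb 0) a)@_b = 0.
  have := orbN e; case/orP => [et|ef]; first by rewrite /hh /gg (ifT _ _ et) mulr0 mul0r.
  apply/eqP; rewrite mulf_eq0; apply/orP; right.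
  apply: contraNT nd => /br_supp /(@brk_deg _ _ _ _) ->.
  by rewrite /= /twoeps (ifN _ _ ef) mulr0 !add0r.
by rewrite /rhs z1 z2 z3 zL zY !mulr0 !addr0.
Qed.

Lemma gge : e = false -> gg = cG 1.
Proof. by move=> e0; rewrite /gg ifN // e0. Qed.

Lemma dgL n : dg (Lb n) = (2 * n)%:~R / 2%:R. Proof. by []. Qed.

Lemma rhs_val a b v1 v2 v3 v4 v5 : (D1b e a)@_b = v1 -> (D2b e a)@_b = v2 ->
  (D3b e a)@_b = v3 -> (br e (Lb 0) a)@_b = v4 -> (br e (Yb 0) a)@_b = v5 ->
  rhs a b = c1 * v1 + c2 * v2 + c3 * v3 + (lam * v4 + hh * v5).
Proof. by rewrite /rhs => -> -> -> -> ->. Qed.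

Ltac gen := move: (cG 1) (cB 0) (cB 1) (cQ 0) (cV 0) al c1 c2 c3 lam hh gg
  => ? ? ? ? ? ? ? ? ? ? ? ?.

Ltac sc := solve [ apply: bvec0; done | apply: bvecK; by rewrite ?add0r ?addr0
  | apply: mcoeff0 | apply: brL0_coef ].

Lemma caseLL n : (D << Lb n >>)@_(Lb n) = rhs (Lb n) (Lb n).
Proof.
rewrite (@rhs_val _ _ 0 0 0 (- dg (Lb n)) 0); try sc.
by rewrite -/(cA n) Ae /lam dgL intrM; gen; field.
Qed.

Lemma caseLY n : e = false -> (D << Lb n >>)@_(Yb n) = rhs (Lb n) (Yb n).
Proof.
move=> e0.
rewrite (@rhs_val _ _ 0 0 0 0 (- yc e n 0)); try sc.
by rewrite -/(cG n) (Ge e0) /hh (gge e0) (ye e0) /yc /epsv; gen; field.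
Qed.

Lemma caseLM n : (D << Lb n >>)@_(Mb n) = rhs (Lb n) (Mb n).
Proof.
rewrite (@rhs_val _ _ 1 n%:~R 0 0 0); try sc.
by rewrite -/(cB n) Be /c1 /c2; gen; ring.
Qed.

Lemma caseYL k : e = false -> (D << Yb k >>)@_(Lb k) = rhs (Yb k) (Lb k).
Proof.
move=> e0.
rewrite (@rhs_val _ _ 0 0 0 0 0); try sc.
by rewrite -/(cP k) (Pe e0); gen; ring.
Qed.

Lemma caseYY k : (D << Yb k >>)@_(Yb k) = rhs (Yb k) (Yb k).
Proof.
rewrite (@rhs_val _ _ 0 0 1 (yc e 0 k) 0); try sc.
by rewrite -/(cQ k) Qe /c3 /lam /yc; gen; field.
Qed.

Lemma caseYM k : e = false -> (D << Yb k >>)@_(Mb k) = rhs (Yb k) (Mb k).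
Proof.
move=> e0.
rewrite (@rhs_val _ _ 0 0 0 0 (0 - k)%:~R); try sc.
  by rewrite -/(cR k) (Re e0) /hh (gge e0); gen; ring.
by apply: bvecK; rewrite e0 add0r addr0.
Qed.

Lemma caseML n : (D << Mb n >>)@_(Lb n) = rhs (Mb n) (Lb n).
Proof.
rewrite (@rhs_val _ _ 0 0 0 0 0); try sc.
by rewrite -/(cS n) Se; gen; ring.
Qed.

Lemma caseMY n : e = false -> (D << Mb n >>)@_(Yb n) = rhs (Mb n) (Yb n).
Proof.
move=> e0.
rewrite (@rhs_val _ _ 0 0 0 0 0); try sc.
by rewrite -/(cT n) (Te e0); gen; ring.
Qed.

Lemma caseMM n : (D << Mb n >>)@_(Mb n) = rhs (Mb n) (Mb n).
Proof.
rewrite (@rhs_val _ _ 0 0 2%:R (- n%:~R) 0); try sc.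
by rewrite -/(cV n) Ve V0e /c3 /lam; gen; ring.
Qed.

Lemma rhs_same a b : deg2 e b = deg2 e a -> (D << a >>)@_b = rhs a b.
Proof.
case: a => [[n|k]|n]; case: b => [[p|j]|p] H.
- have -> : p = n by move: H => /=; lia.
  exact: caseLL.
- have [e0 ->] := @degYL _ _ _ H; exact: (caseLY _ e0).
- have -> : p = n by move: H => /=; lia.
  exact: caseLM.
- have [e0 ->] := @degYL _ _ _ (esym H); exact: (caseYL _ e0).
- have -> : j = k by move: H => /=; lia.
  exact: caseYY.
- have [e0 ->] := @degYM _ _ _ (esym H); exact: (caseYM _ e0).
- have -> : p = n by move: H => /=; lia.
  exact: caseML.
- have [e0 ->] := @degYM _ _ _ H; exact: (caseMY _ e0).
- have -> : p = n by move: H => /=; lia.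
  exact: caseMM.
Qed.

Definition u : SV e := u1 + (lam *: << Lb 0 >> + hh *: << Yb 0 >>).

Lemma basis_eq a : D << a >> = c1 *: D1 (<< a >> : SV e) + c2 *: D2 (<< a >> : SV e) + c3 *: D3 (<< a >> : SV e) + lie u << a >>.
Proof.
have hl : lie u << a >> = lie u1 << a >> + (lam *: br e (Lb 0) a + hh *: br e (Yb 0) a).
  apply: (etrans (lieD_l _ _ _ _)); congr (_ + _).
  apply: (etrans (lieD_l _ _ _ _)); congr (_ + _).
    by apply: (etrans (lieZ_l _ _ _ _)); congr (_ *: _); exact: lie_basis.
  by apply: (etrans (lieZ_l _ _ _ _)); congr (_ *: _); exact: lie_basis.
rewrite hl /D1 /D2 /D3 !linext_basis.
apply/malgP => b.
rewrite coefR.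
have [sd|nd] := eqVneq (deg2 e b) (deg2 e a).
  by apply: comb1; [exact: (@rhs_same a b sd) | exact: (@samedeg a b sd)].
by apply: comb2; [exact: (@offdeg a b nd) | exact: (@rhs_off a b nd)].
Qed.

Lemma der_decomp : exists (k1 k2 k3 : C) (v : SV e),
  forall y, D y = k1 *: D1 y + k2 *: D2 y + k3 *: D3 y + lie v y.
Proof.
exists c1, c2, c3, u => y.
rewrite (@decomp e D Dlin y) (@decomp e (@D1 e) (@linext_lin e (@D1b e)) y).
rewrite (@decomp e (@D2 e) (@linext_lin e (@D2b e)) y).
rewrite (@decomp e (@D3 e) (@linext_lin e (@D3b e)) y).
rewrite (@decomp e (lie u) (@lie_linr e u) y).
rewrite !scaler_sumr -!big_split /=; apply: eq_bigr => a _.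
by apply: scal_comb; exact: basis_eq.
Qed.
End Der.

Lemma bvec_anti e c c' k k' : c = - c' -> k = k' -> bvec e c k = - bvec e c' k'.
Proof. by move=> -> ->; apply/malgP => i; rewrite mcoeffN !mcoeffU mulNrn. Qed.

Lemma br_anti e a b : br e a b = - br e b a.
Proof.
case: a => [[m|j]|m]; case: b => [[n|k]|n]; try exact: (esym (oppr0 _)).
- by apply: bvec_anti; [rewrite -intrN opprB | rewrite addrC].
- by apply: bvec_anti; [rewrite opprK | ].
- by apply: bvec_anti.
- by apply: bvec_anti.
- by apply: bvec_anti; [rewrite -intrN opprB | rewrite (addrC j k)].
- by apply: bvec_anti; [rewrite opprK | ].
Qed.

Lemma anti_gen (R : comNzRingType) (V : lmodType R) (I : Type) (r1 r2 : seq I)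
  (x y : I -> R) (B : I -> I -> V) : (forall a b, B a b = - B b a) ->
  \sum_(a <- r1) \sum_(b <- r2) (x a * y b) *: B a b =
  - \sum_(b <- r2) \sum_(a <- r1) (y b * x a) *: B b a.
Proof.
move=> HB; rewrite exchange_big -sumrN; apply: eq_bigr => b _.
rewrite -sumrN; apply: eq_bigr => a _.
by rewrite HB scalerN mulrC.
Qed.

Lemma lie_anti e (x y : SV e) : lie x y = - lie y x.
Proof. by rewrite /lie; apply: anti_gen => a b; exact: br_anti. Qed.

Lemma lin0g (R : pzRingType) (U V : lmodType R) (F : U -> V) : linear F -> F 0 = 0.
Proof. by move=> HF; have := zmod_morphism_linear HF 0 0; rewrite !subrr. Qed.

Lemma linNg (R : pzRingType) (U V : lmodType R) (F : U -> V) : linear F -> forall v, F (- v) = - F v.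
Proof. by move=> HF v; have := zmod_morphism_linear HF 0 v; rewrite !sub0r (@lin0g _ _ _ _ HF) sub0r. Qed.

Lemma lin_sum_g (R : pzRingType) (U V : lmodType R) (F : U -> V) (HF : linear F)
  (I : Type) (s : seq I) (c : I -> R) (g : I -> U) :
  F (\sum_(i <- s) c i *: g i) = \sum_(i <- s) c i *: F (g i).
Proof.
elim: s => [|i s IH]; first by rewrite !big_nil (@lin0g _ _ _ _ HF).
by rewrite !big_cons HF IH.
Qed.

Lemma sum_comb (R : comNzRingType) (V : lmodType R) (I : Type) (s : seq I)
  (x r1 r2 r3 : I -> R) (X1 X2 X3 : V) (Y : I -> V) :
  \sum_(a <- s) x a *: (r1 a *: X1 + r2 a *: X2 + r3 a *: X3 + Y a) =
  (\sum_(a <- s) x a * r1 a) *: X1 + (\sum_(a <- s) x a * r2 a) *: X2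
  + (\sum_(a <- s) x a * r3 a) *: X3 + \sum_(a <- s) x a *: Y a.
Proof.
rewrite !scaler_suml -!big_split; apply: eq_bigr => a _ /=.
by rewrite !scalerDr !scalerA.
Qed.

Lemma coef_scalar e (r : Idx -> C) : scalar (fun x : SV e => \sum_(a <- msupp x) x@_a * r a).
Proof.
move=> k x y /=.
rewrite !(@sum_ext e _ _ (msupp x `|` msupp y)%fset (fun a c => c * r a)) ?msupp_lin ?fsubsetUl ?fsubsetUr //;
  try by move=> a; rewrite mul0r.
rewrite mulr_sumr -big_split; apply: eq_bigr => a _ /=.
by rewrite mcoeffD mcoeffZ mulrDl mulrA.
Qed.

Theorem lemma3p1 (e : bool) (f : SV e -> SV e -> SV e)
  (f_lin_l : forall y : SV e, linear (fun x : SV e => f x y))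
  (f_lin_r : forall x : SV e, linear (f x))
  (f_bider : biderivation f) :
  exists (phi psi : {linear SV e -> SV e})
         (rho1 rho2 rho3 theta1 theta2 theta3 : {scalar SV e}),
    forall x y : SV e,
      f x y = rho1 x *: D1 y + rho2 x *: D2 y + rho3 x *: D3 y + lie (phi x) y
    /\ f x y = theta1 y *: D1 x + theta2 y *: D2 x + theta3 y *: D3 x
               + lie x (psi y).
Proof.
move: f_bider => [Hb1 Hb2].
have cD : forall a : Idx, {p : C * C * C * SV e | forall y,
    f << a >> y = p.1.1.1 *: D1 y + p.1.1.2 *: D2 y + p.1.2 *: D3 y + lie p.2 y}.
  move=> a; apply: constructive_indefinite_description.
  have [k1 [k2 [k3 [v H]]]] := @der_decomp e (f << a >>) (f_lin_r _) (fun x y => Hb2 _ x y).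
  by exists (k1, k2, k3, v).
have cE : forall b : Idx, {p : C * C * C * SV e | forall x,
    f x << b >> = p.1.1.1 *: D1 x + p.1.1.2 *: D2 x + p.1.2 *: D3 x + lie p.2 x}.
  move=> b; apply: constructive_indefinite_description.
  have [k1 [k2 [k3 [v H]]]] := @der_decomp e (fun x => f x << b >>) (f_lin_l _)
    (fun x y => etrans (Hb1 x y _) (addrC _ _)).
  by exists (k1, k2, k3, v).
pose r1 a := (sval (cD a)).1.1.1.
pose r2 a := (sval (cD a)).1.1.2.
pose r3 a := (sval (cD a)).1.2.
pose v a := (sval (cD a)).2.
pose t1 b := (sval (cE b)).1.1.1.
pose t2 b := (sval (cE b)).1.1.2.
pose t3 b := (sval (cE b)).1.2.
pose w b := - (sval (cE b)).2.
exists (@mkLin e _ (@linext_lin e v)), (@mkLin e _ (@linext_lin e w)).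
exists (@mkSc e _ (coef_scalar e r1)), (@mkSc e _ (coef_scalar e r2)), (@mkSc e _ (coef_scalar e r3)).
exists (@mkSc e _ (coef_scalar e t1)), (@mkSc e _ (coef_scalar e t2)), (@mkSc e _ (coef_scalar e t3)).
move=> x y; split.
- transitivity (\sum_(a <- msupp x) x@_a *: f << a >> y).
    exact: (@decomp e (fun x => f x y) (f_lin_l y) x).
  transitivity (\sum_(a <- msupp x) x@_a *: (r1 a *: D1 y + r2 a *: D2 y + r3 a *: D3 y + lie (v a) y)).
    by apply: eq_bigr => a _; congr (_ *: _); exact: (svalP (cD a) y).
  apply: (etrans (@sum_comb _ _ _ _ _ _ _ _ _ _ _ _)); congr (_ + _).
  symmetry; exact: (@lin_sum_g _ _ _ (fun u => lie u y) (@lie_linl e y) _ (msupp x) (fun a => x@_a) v).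
- transitivity (\sum_(b <- msupp y) y@_b *: f x << b >>).
    exact: (@decomp e (f x) (f_lin_r x) y).
  transitivity (\sum_(b <- msupp y) y@_b *: (t1 b *: D1 x + t2 b *: D2 x + t3 b *: D3 x + lie x (w b))).
    apply: eq_bigr => b _; congr (_ *: _).
    rewrite (svalP (cE b) x); congr (_ + _).
    by rewrite lie_anti /w (@linNg _ _ _ _ (@lie_linr e x)).
  apply: (etrans (@sum_comb _ _ _ _ _ _ _ _ _ _ _ _)); congr (_ + _).
  symmetry; exact: (@lin_sum_g _ _ _ (lie x) (@lie_linr e x) _ (msupp y) (fun b => y@_b) w).
Qed.
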